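(* Let $p\ge 2$ and $\delta>0$. Define $$\mathcal{G}_\delta(t):=\int_0^t\frac{s(s+\delta)^{\frac{p-2}{2}}}{\sqrt{1+\delta+s^2}}\,ds\quad(t\ge0),\qquad H_{\frac p2}(\xi)=\begin{cases}(|\xi|-1)_+^{\frac p2}\frac{\xi}{|\xi|}&\xi\ne0,\\ 0&\xi=0.\end{cases}$$ Then there is a constant $c_p>0$ depending only on $p$ such that for all $\xi,\eta\in\mathbb{R}^n$, $$\left|\mathcal{G}_\delta\left((|\xi|-\delta-1)_+\right)-\mathcal{G}_\delta\left((|\eta|-\delta-1)_+\right)\right|^2\le c_p\left|H_{\frac p2}(\xi)-H_{\frac p2}(\eta)\right|^2.$$
   Context: $(\cdot)_+$ denotes the positive part; $|\cdot|$ is the Euclidean norm. *)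

(* Defs.v *)
From HB Require Import structures.
From mathcomp Require Import all_boot all_order all_algebra.
From mathcomp Require Import all_classical all_reals all_analysis.
Set Implicit Arguments. Unset Strict Implicit. Unset Printing Implicit Defensive.
Import Order.TTheory GRing.Theory Num.Theory.
Local Open Scope ring_scope.
Local Open Scope classical_set_scope.

Definition pos_part {R : realType} (x : R) : R := Num.max x 0.

Definition enorm {R : realType} {n : nat} (v : 'rV[R]_n) : R :=
  Num.sqrt (\sum_(i < n) v ord0 i ^+ 2).

Definition Gdelta {R : realType} (p delta t : R) : R :=
  (\int[lebesgue_measure]_(s in `[0, t]) 
      (s * powR (s + delta) ((p - 2) / 2) / Num.sqrt (1 + delta + s ^+ 2)))%R.

Definition Hp2 {R : realType} {n : nat} (p : R) (xi : 'rV[R]_n) : 'rV[R]_n :=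
  if xi == 0 then 0
  else (powR (pos_part (enorm xi - 1)) (p / 2) / enorm xi) *: xi.

(* Main.v *)
Require Import Defs.
From HB Require Import structures.
From mathcomp Require Import all_boot all_order all_algebra.
From mathcomp Require Import all_classical all_reals all_analysis.
From mathcomp Require Import measurable_realfun.
From mathcomp Require Import ring lra.
Import Order.TTheory GRing.Theory Num.Theory.
Local Open Scope ring_scope.

Definition gg {R : realType} (p delta : R) (s : R) : R :=
  s * powR (s + delta) ((p - 2) / 2) / Num.sqrt (1 + delta + s ^+ 2).

Lemma r_ge0 {R : realType} (p : R) : 2 <= p -> 0 <= (p - 2) / 2.
Proof. move=> hp; apply: divr_ge0 => //; lra. Qed.

Lemma gg_bound {R : realType} (p delta s v : R) : 2 <= p -> 0 < delta ->
  0 <= s -> s <= v -> 0 <= gg p delta s <= powR (v + delta) ((p - 2) / 2).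
Proof.
move=> hp hd s0 sv.
have X0 : 0 < Num.sqrt (1 + delta + s ^+ 2).
  by rewrite sqrtr_gt0; nra.
have sX : s <= Num.sqrt (1 + delta + s ^+ 2).
  rewrite -{1}(ger0_norm s0) -sqrtr_sqr; apply: ler_wsqrtr; lra.
have P0 : 0 <= powR (s + delta) ((p - 2) / 2) by apply: powR_ge0.
have P1 : powR (s + delta) ((p - 2) / 2) <= powR (v + delta) ((p - 2) / 2).
  apply: ge0_ler_powR; first exact: r_ge0.
  - by rewrite nnegrE; lra.
  - by rewrite nnegrE; lra.
  - lra.
rewrite /gg mulrAC; apply/andP; split.
  apply: mulr_ge0 => //; apply: divr_ge0 => //; exact: ltW.
apply: (le_trans _ P1).
rewrite -[X in _ <= X]mul1r; apply: ler_wpM2r => //.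
by rewrite ler_pdivrMr // mul1r.
Qed.

Lemma gg_meas {R : realType} (p delta : R) : 0 < delta -> measurable_fun setT (gg p delta).
Proof.
move=> hd.
have -> : gg p delta = (fun s => s * powR (s + delta) ((p - 2) / 2) *
                   powR (1 + delta + s ^+ 2) (- (2^-1))).
  apply/funext => s; rewrite /gg powRN powR12_sqrt //.
  nra.
have mg1 : measurable_fun setT (fun s : R => s + delta).
  apply: measurable_funD; first exact: measurable_id.
  exact: measurable_cst.
have mg2 : measurable_fun setT (fun s : R => 1 + delta + s ^+ 2).
  apply: measurable_funD; first exact: measurable_cst.
  by apply: measurable_funX; exact: measurable_id.
have m1 := measurableT_comp (measurable_powR (R:=R) ((p - 2) / 2)) mg1.
have m2 := measurableT_comp (measurable_powR (R:=R) (- (2^-1))) mg2.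
apply: measurable_funM; last exact: m2.
apply: measurable_funM; first exact: measurable_id.
exact: m1.
Qed.

Lemma gg_int {R : realType} (p delta : R) (a b : itv_bound R) (v : R) :
  2 <= p -> 0 < delta ->
  (forall x, x \in Interval a b -> 0 <= x <= v) ->
  (lebesgue_measure [set` Interval a b] < +oo)%E ->
  lebesgue_measure.-integrable [set` Interval a b] (EFin \o gg p delta).
Proof.
move=> hp hd hI hfin.
apply: measurable_bounded_integrable => //.
  have H := gg_meas p delta hd. apply: measurable_funS H => //.
rewrite /bounded_near; near=> M => x /= hx.
have /andP[h1 h2] := hI x hx.
have /andP[h3 h4] := gg_bound p delta x v hp hd h1 h2.
rewrite ger0_norm //; apply: (le_trans h4).
near: M; apply: nbhs_pinfty_ge; exact: num_real.
Unshelve. all: by end_near.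
Qed.

Lemma itv_fin {R : realType} (u v : R) (b1 b2 : bool) :
  (lebesgue_measure [set` Interval (BSide b1 u) (BSide b2 v)] < +oo)%E.
Proof.
rewrite lebesgue_measure_itv /=; case: ifP => _; last exact: ltry.
by rewrite -EFinD ltry.
Qed.

Lemma G_diff {R : realType} (p delta u v : R) : 2 <= p -> 0 < delta ->
  0 <= u -> u <= v ->
  0 <= Gdelta p delta v - Gdelta p delta u <= (v - u) * powR (v + delta) ((p - 2) / 2).
Proof.
move=> hp hd u0 uv.
have E : forall t, Gdelta p delta t =
   (\int[lebesgue_measure]_(s in [set` Interval (BLeft 0) (BRight t)]) gg p delta s)%R by [].
rewrite !E.
have Iv := @gg_int R p delta (BLeft 0) (BRight v) v hp hd
  (fun x => ltac:(rewrite in_itv /= => /andP[h1 h2]; apply/andP; split => //)) (itv_fin _ _ _ _).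
rewrite (Rintegral_itvB Iv); last 2 first.
- by rewrite bnd_simp.
- by rewrite bnd_simp.
have Iuv := @gg_int R p delta (BRight u) (BRight v) v hp hd
  (fun x => ltac:(rewrite in_itv /= => /andP[h1 h2]; apply/andP; split => //; lra)) (itv_fin _ _ _ _).
apply/andP; split.
  apply: Rintegral_ge0 => x; rewrite /= in_itv /= => /andP[h1 h2].
  have h1' : 0 <= x by lra.
  by have /andP[] := gg_bound p delta x v hp hd h1' h2.
set M := powR (v + delta) ((p - 2) / 2).
have Ic : lebesgue_measure.-integrable [set` Interval (BRight u) (BRight v)] (EFin \o cst M).
  apply: measurable_bounded_integrable => //; first exact: itv_fin.
  rewrite /bounded_near; near=> K => x /= hx.
  near: K; apply: nbhs_pinfty_ge; exact: num_real.
apply: le_trans (le_Rintegral _ Iuv Ic _) _ => //.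
  move=> x; rewrite /= in_itv /= => /andP[h1 h2].
  have h1' : 0 <= x by lra.
  by have /andP[] := gg_bound p delta x v hp hd h1' h2.
rewrite Rintegral_cst //.
have -> : fine (lebesgue_measure [set` Interval (BRight u) (BRight v)]) = v - u.
  rewrite lebesgue_measure_itv /= lte_fin; case: ltP => h /=; first by [].
  lra.
  by rewrite mulrC.
Unshelve. all: by end_near.
Qed.
Section CS.
Variable R : realType.

Lemma dsum n (a b : 'I_n -> R) :
  \sum_i \sum_j a i * b j = (\sum_i a i) * (\sum_j b j).
Proof. rewrite mulr_suml; apply: eq_bigr => i _; by rewrite mulr_sumr. Qed.

Lemma lagrange n (u v : 'I_n -> R) :
  \sum_i \sum_j (u i * v j - u j * v i) ^+ 2 =
  2 * ((\sum_i u i ^+ 2) * (\sum_j v j ^+ 2) - (\sum_i u i * v i) ^+ 2).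
Proof.
have E : forall i j, (u i * v j - u j * v i) ^+ 2 =
   (u i ^+ 2 * v j ^+ 2 + v i ^+ 2 * u j ^+ 2) - (2 * (u i * v i)) * (u j * v j).
  by move=> i j; ring.
under eq_bigr do under eq_bigr do rewrite E.
under eq_bigr do rewrite sumrB big_split.
rewrite sumrB big_split /= !dsum -mulr_sumr.
ring.
Qed.

Lemma CS n (u v : 'I_n -> R) :
  \sum_i u i * v i <= Num.sqrt (\sum_i u i ^+ 2) * Num.sqrt (\sum_i v i ^+ 2).
Proof.
have Su : 0 <= \sum_i u i ^+ 2 by apply: sumr_ge0 => i _; exact: sqr_ge0.
have Sv : 0 <= \sum_i v i ^+ 2 by apply: sumr_ge0 => i _; exact: sqr_ge0.
rewrite -sqrtrM //.
apply: (le_trans (ler_norm _)).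
rewrite -sqrtr_sqr; apply: ler_wsqrtr.
have : 0 <= \sum_i \sum_j (u i * v j - u j * v i) ^+ 2.
  by apply: sumr_ge0 => i _; apply: sumr_ge0 => j _; exact: sqr_ge0.
rewrite lagrange; lra.
Qed.

Lemma rev_tri n (u v : 'rV[R]_n) :
  (enorm u - enorm v) ^+ 2 <= enorm (u - v) ^+ 2.
Proof.
have Su : 0 <= \sum_i u ord0 i ^+ 2 by apply: sumr_ge0 => i _; exact: sqr_ge0.
have Sv : 0 <= \sum_i v ord0 i ^+ 2 by apply: sumr_ge0 => i _; exact: sqr_ge0.
have Sw : 0 <= \sum_i (u - v) ord0 i ^+ 2 by apply: sumr_ge0 => i _; exact: sqr_ge0.
rewrite /enorm sqr_sqrtr //.
have -> : \sum_i (u - v) ord0 i ^+ 2 = \sum_i u ord0 i ^+ 2 + \sum_i v ord0 i ^+ 2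
   - 2 * \sum_i u ord0 i * v ord0 i.
  rewrite mulr_sumr -big_split -sumrB; apply: eq_bigr => i _; rewrite !mxE /=; ring.
have := CS _ (u ord0) (v ord0).
have := sqr_sqrtr Su; have := sqr_sqrtr Sv.
set a := Num.sqrt _; set b := Num.sqrt _.
move=> ha hb; rewrite -ha -hb; nra.
Qed.
End CS.

Lemma pp_cases {R : realType} (x : R) :
  (pos_part x = x /\ 0 <= x) \/ (pos_part x = 0 /\ x <= 0).
Proof.
rewrite /pos_part; case: (leP x 0) => h.
  by right; split => //; rewrite max_r.
by left; split => //; exact: ltW.
Qed.

Lemma powineq {R : realType} (x y r : R) : 0 <= y -> y <= x -> 0 <= r ->
  (x - y) * powR x r <= powR x (r + 1) - powR y (r + 1).
Proof.
move=> y0 yx r0.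
have hr1 : (r + 1 == 0) = false by apply: gt_eqF; lra.
rewrite !powRD ?hr1 // !powRr1 //; last lra.
have X0 : 0 <= powR y r by apply: powR_ge0.
have XY : powR y r <= powR x r.
  by apply: ge0_ler_powR => //; rewrite nnegrE; lra.
nra.
Qed.

Definition hh {R : realType} (p a : R) := powR (pos_part (a - 1)) (p / 2).

Lemma key {R : realType} (p delta a b : R) : 2 <= p -> 0 < delta -> b <= a ->
  0 <= Gdelta p delta (pos_part (a - delta - 1)) - Gdelta p delta (pos_part (b - delta - 1))
  <= hh p a - hh p b.
Proof.
move=> hp hd ba.
set ta := pos_part (a - delta - 1); set tb := pos_part (b - delta - 1).
have hta := pp_cases (a - delta - 1); have htb := pp_cases (b - delta - 1).
have hpa := pp_cases (a - 1); have hpb := pp_cases (b - 1).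
rewrite -/ta -/tb in hta htb.
have tb0 : 0 <= tb by case: htb => -[-> ?]; lra.
have tab : tb <= ta by case: hta => -[-> ?]; case: htb => -[-> ?]; lra.
have /andP[D0 D1] := G_diff p delta tb ta hp hd tb0 tab.
apply/andP; split => //; apply: (le_trans D1).
have hq : p / 2 = (p - 2) / 2 + 1 by lra.
have r0 := r_ge0 p hp.
rewrite /hh.
have pb_le : pos_part (b - 1) <= tb + delta.
  by case: hpb => -[-> ?]; case: htb => -[-> ?]; lra.
have pb0 : 0 <= pos_part (b - 1) by case: hpb => -[-> ?]; lra.
have Hb : powR (pos_part (b - 1)) (p / 2) <= powR (tb + delta) (p / 2).
  apply: ge0_ler_powR => //; rewrite ?nnegrE //; [lra | lra].
case: hta => -[hta1 hta2].
- have -> : pos_part (a - 1) = ta + delta.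
    by case: hpa => -[-> ?]; lra.
  have := powineq (ta + delta) (tb + delta) ((p - 2) / 2).
  rewrite -hq; move=> /(_ ltac:(lra) ltac:(lra) r0) H.
  have -> : ta - tb = (ta + delta) - (tb + delta) by ring.
  lra.
- have ta0 : ta = 0 by [].
  have tb00 : tb = 0 by lra.
  rewrite ta0 tb00 subrr mul0r subr_ge0.
  apply: ge0_ler_powR => //; rewrite ?nnegrE //.
  + lra.
  + by case: hpa => -[-> ?]; lra.
  + by case: hpa => -[-> ?]; case: hpb => -[-> ?]; lra.
Qed.

Lemma enormZ {R : realType} n (c : R) (xi : 'rV[R]_n) :
  enorm (c *: xi) = `|c| * enorm xi.
Proof.
rewrite /enorm; under eq_bigr do rewrite mxE exprMn.
rewrite -mulr_sumr sqrtrM ?sqr_ge0 // sqrtr_sqr //.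
Qed.

Lemma enorm_ge0 {R : realType} n (xi : 'rV[R]_n) : 0 <= enorm xi.
Proof. exact: sqrtr_ge0. Qed.

Lemma enorm_Hp2 {R : realType} (p : R) n (xi : 'rV[R]_n) : 2 <= p ->
  enorm (Hp2 p xi) = hh p (enorm xi).
Proof.
move=> hp.
have hq : p / 2 != 0 by apply: lt0r_neq0; lra.
have h0 : hh p 0 = 0.
  rewrite /hh (_ : pos_part (0 - 1) = 0) ?powR0 //.
  by case: (pp_cases (0 - 1 : R)) => -[-> ?]; lra.
rewrite /Hp2; case: eqP => [->|_].
  have E0 : enorm (0 : 'rV[R]_n) = 0.
    by rewrite -(scale0r (0 : 'rV[R]_n)) enormZ normr0 mul0r.
  by rewrite E0 h0.
rewrite enormZ ger0_norm; last first.
  by apply: divr_ge0; [exact: powR_ge0 | exact: enorm_ge0].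
have [E|E] := eqVneq (enorm xi) 0.
  by rewrite E mulr0 h0.
by rewrite divfK.
Qed.

Theorem mainTheorem4 (R : realType) (p : R) (hp : 2 <= p) :
  exists c : R, 0 < c /\
    forall (delta : R), 0 < delta ->
    forall (n : nat) (xi eta : 'rV[R]_n),
      `| Gdelta p delta (pos_part (enorm xi - delta - 1))
         - Gdelta p delta (pos_part (enorm eta - delta - 1)) | ^+ 2
      <= c * enorm (Hp2 p xi - Hp2 p eta) ^+ 2.
Proof.
exists 1; split => // delta hd n xi eta; rewrite mul1r.
have K : `| Gdelta p delta (pos_part (enorm xi - delta - 1))
         - Gdelta p delta (pos_part (enorm eta - delta - 1)) |
         <= `| hh p (enorm xi) - hh p (enorm eta) |.
  case: (leP (enorm eta) (enorm xi)) => h.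
    have /andP[h1 h2] := key p delta _ _ hp hd h.
    rewrite !ger0_norm //; exact: le_trans h2.
  have /andP[h1 h2] := key p delta _ _ hp hd (ltW h).
  rewrite distrC [X in _ <= X]distrC !ger0_norm //; exact: le_trans h2.
have T := rev_tri R n (Hp2 p xi) (Hp2 p eta).
rewrite !enorm_Hp2 // in T.
have N1 := normr_ge0 (Gdelta p delta (pos_part (enorm xi - delta - 1))
         - Gdelta p delta (pos_part (enorm eta - delta - 1))).
have N2 : `| hh p (enorm xi) - hh p (enorm eta) | ^+ 2 = (hh p (enorm xi) - hh p (enorm eta)) ^+ 2.
  by rewrite -normrX ger0_norm // sqr_ge0.
nra.
Qed.
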